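(* Fix $\mathbf{k}\neq 0$, $t\ge0$, $n\ge1$, and let $g$ be a function of $z$ analytic near the segment $[-i,i]$ of the imaginary axis. Let $\theta_j=\frac{j\pi}{n+1}$, $z_j=i\cos\theta_j$, $\alpha_j=\frac{\sin^2\theta_j}{n+1}$ and $\Delta\theta=\frac{\pi}{2(n+1)}$. Then $$\left|2|\mathbf{k}|\int_{-i}^{i}\sqrt{1+z^2}e^{zt}g(z)\,dz-2\pi i|\mathbf{k}|\sum_{j=1}^n g(z_j)e^{z_jt}\alpha_j\right|\le\frac23|\mathbf{k}|\Delta\theta^3\Big(3\max_{z\in[i\cos\Delta\theta,\,i]}|g(z)|+3\max_{z\in[-i,\,-i\cos\Delta\theta]}|g(z)|+\sum_{j=1}^n\max_{z\in I_j}|E(z)|\Big),$$ where $I_j$ is the segment of the imaginary axis between $i\cos(\theta_j-\Delta\theta)$ and $i\cos(\theta_j+\Delta\theta)$, and $$E(z)=e^{zt}\Big[(z^4+2z^2+1)\big(g''(z)+2t\,g'(z)+t^2g(z)\big)+5(z^3+z)\big(g'(z)+t\,g(z)\big)+(4z^2+2)g(z)\Big].$$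
   Context: The integral is along the segment of the imaginary axis from $-i$ to $i$. In the paper $g$ is given by $|\mathbf{k}|\,g(s/|\mathbf{k}|)=\hat U(x,\mathbf{k},s)$, where $\hat U$ is the Laplace–Fourier transform of a solution of the wave equation, and derivatives are with respect to $z=s/|\mathbf{k}|$. *)

(* Defs.v *)
From Stdlib Require Import Reals.
From Coquelicot Require Export Coquelicot.
Open Scope R_scope.

Definition Cexp (z : C) : C :=
  (exp (Re z) * cos (Im z), exp (Re z) * sin (Im z)).

(* principal square root of a complex number *)
Definition Csqrt (w : C) : C :=
  (sqrt ((Cmod w + Re w) / 2),
   (if Rlt_dec (Im w) 0 then -1 else 1) * sqrt ((Cmod w - Re w) / 2)).

Definition seg_integral (f : C -> C) (a b : C) : C :=
  RInt (V := C_R_CompleteNormedModule)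
       (fun s : R => Cmult (f (Cplus a (Cmult (RtoC s) (Cminus b a)))) (Cminus b a))
       0 1.

Fixpoint csum1 (f : nat -> C) (n : nat) : C :=
  match n with O => RtoC 0 | S m => Cplus (csum1 f m) (f (S m)) end.
Fixpoint rsum1 (f : nat -> R) (n : nat) : R :=
  match n with O => 0 | S m => rsum1 f m + f (S m) end.

Definition on_iseg (lo hi : R) (z : C) : Prop :=
  Re z = 0 /\ lo <= Im z <= hi.

Definition Cderiv_n (n : nat) (g : C -> C) : C -> C := Nat.iter n C_derive g.

(* g analytic near the segment [-i, i]: there is an open set U containing
   the segment on which g is complex-differentiable to all orders
   (equivalently, holomorphic, i.e. analytic, on U). *)
Definition analytic_near_iseg (g : C -> C) : Prop :=
  exists U : C -> Prop, open U /\ (forall z, on_iseg (-1) 1 z -> U z) /\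
    forall (m : nat) (z : C), U z -> ex_derive (Cderiv_n m g) z.

Definition theta (n j : nat) : R := INR j * PI / INR (n + 1).
Definition zpt (n j : nat) : C := Cmult Ci (RtoC (cos (theta n j))).
Definition alpha (n j : nat) : R := (sin (theta n j)) ^ 2 / INR (n + 1).
Definition dtheta (n : nat) : R := PI / (2 * INR (n + 1)).

Definition Efun (g : C -> C) (t : R) (z : C) : C :=
  let g0 := g z in
  let g1 := C_derive g z in
  let g2 := C_derive (C_derive g) z in
  let tt := RtoC t in
  Cmult (Cexp (Cmult z tt))
   (Cplus (Cplus
     (Cmult (Cplus (Cplus (Cpow z 4) (Cmult (RtoC 2) (Cpow z 2))) (RtoC 1))
            (Cplus (Cplus g2 (Cmult (Cmult (RtoC 2) tt) g1)) (Cmult (Cpow tt 2) g0)))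
     (Cmult (Cmult (RtoC 5) (Cplus (Cpow z 3) z)) (Cplus g1 (Cmult tt g0))))
     (Cmult (Cplus (Cmult (RtoC 4) (Cpow z 2)) (RtoC 2)) g0)).

(* Main.v *)
Require Import Defs.
From Stdlib Require Import Reals Lra Lia.
From Coquelicot Require Import Coquelicot.
Open Scope R_scope.

Lemma ballC (x y : C) d : ball (M:=C_UniformSpace) x d y <-> (Rabs (fst y - fst x) < d /\ Rabs (snd y - snd x) < d).
Proof.
destruct x, y. simpl. unfold ball; simpl. unfold prod_ball, ball; simpl.
unfold AbsRing_ball, abs, minus, plus, opp; simpl. unfold Rminus; tauto.
Qed.

Lemma im_le_Cmod (c : C) : Rabs (snd c) <= Cmod c.
Proof. eapply Rle_trans; [apply Rmax_r| apply Rmax_Cmod]. Qed.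
Lemma fst_le_Cmod (c : C) : Rabs (fst c) <= Cmod c.
Proof. eapply Rle_trans; [apply Rmax_l| apply Rmax_Cmod]. Qed.

Lemma chain (f : C -> C) (p : R -> R) (x p' : R) (l : C) :
  derivable_pt_lim p x p' ->
  is_derive (K:=C_AbsRing) (V:=C_NormedModule) f (0, p x) l ->
  derivable_pt_lim (fun y => fst (f (0, p y))) x (- p' * snd l) /\
  derivable_pt_lim (fun y => snd (f (0, p y))) x (p' * fst l).
Proof.
intros Hp [_ Hf].
specialize (Hf (0, p x) (fun P H => H)).
set (A := Rabs (fst l) + Rabs (snd l) + 1).
assert (HA : 0 < A) by (unfold A; generalize (Rabs_pos (fst l)) (Rabs_pos (snd l)); lra).
set (B := Rabs p' + 1).
assert (HB : 0 < B) by (unfold B; generalize (Rabs_pos p'); lra).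
assert (key : forall eps, 0 < eps -> exists delta : posreal, forall h, h <> 0 -> Rabs h < delta ->
   exists r : C, Cmod r <= eps / (2 * B) * Rabs (p (x + h) - p x) /\
     fst (f (0, p (x+h))) - fst (f (0, p x)) = fst r - (p (x+h) - p x) * snd l /\
     snd (f (0, p (x+h))) - snd (f (0, p x)) = snd r + (p (x+h) - p x) * fst l /\
     Rabs ((p (x+h) - p x) / h - p') < eps / (2 * A) /\
     Rabs (p (x+h) - p x) <= B * Rabs h).
{ intros eps Heps.
  assert (He1 : 0 < eps / (2 * B)) by (apply Rdiv_lt_0_compat; lra).
  destruct (Hf (mkposreal _ He1)) as [d Hd].
  assert (He2 : 0 < Rmin 1 (eps / (2 * A))) by (apply Rmin_pos; [lra| apply Rdiv_lt_0_compat; lra]).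
  destruct (Hp _ He2) as [d2 Hd2].
  assert (Hd3 : 0 < Rmin d2 (d / B)) by (apply Rmin_pos; [apply cond_pos| apply Rdiv_lt_0_compat; [apply cond_pos|lra]]).
  exists (mkposreal _ Hd3). intros h Hh0 Hh. simpl in Hh.
  specialize (Hd2 h Hh0 (Rlt_le_trans _ _ _ Hh (Rmin_l _ _))).
  assert (Hlt1 : Rabs ((p (x + h) - p x) / h - p') < 1) by (eapply Rlt_le_trans; [exact Hd2| apply Rmin_l]).
  assert (HD : Rabs (p (x+h) - p x) <= B * Rabs h).
  { replace (p (x+h) - p x) with (((p (x + h) - p x) / h - p' + p') * h) by (field; auto).
    rewrite Rabs_mult. apply Rmult_le_compat_r; [apply Rabs_pos|].
    unfold B. eapply Rle_trans; [apply Rabs_triang|]. lra. }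
  set (y := (0, p (x+h)) : C).
  assert (Hm : Cmod (Cminus y (0, p x)) = Rabs (p (x+h) - p x)).
  { unfold y, minus, plus, opp; simpl. unfold Cmod; simpl.
    rewrite <- sqrt_Rsqr_abs; f_equal; unfold Rsqr; ring. }
  assert (Hball : ball (M:=AbsRing_UniformSpace C_AbsRing) (0, p x) d y).
  { change (Cmod (Cminus y (0, p x)) < d). rewrite Hm.
      eapply Rle_lt_trans; [exact HD|].
      assert (Rabs h < d / B) by (eapply Rlt_le_trans; [exact Hh| apply Rmin_r]).
      apply (Rmult_lt_compat_l B) in H; [|lra]. 
      replace (B * (d / B)) with (pos d) in H by (field; lra). lra. }
  specialize (Hd y Hball). simpl in Hd.
  exists (minus (minus (f y) (f (0, p x))) (scal (minus y (0, p x)) l)).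
  change (norm ?z) with (Cmod z) in Hd.
  change (minus y (0, p x)) with (Cminus y (0, p x)) in Hd. rewrite Hm in Hd. split; [exact Hd|].
  unfold y; destruct (f (0, p (x+h))) as [u1 u2]; destruct (f (0, p x)) as [v1 v2]; destruct l as [l1 l2].
  unfold minus, plus, opp, scal; simpl. unfold Cmult; simpl.
  split; [ring|]. split; [ring|]. split.
  - eapply Rlt_le_trans; [exact Hd2| apply Rmin_r].
  - exact HD. }
split; intros eps Heps; destruct (key eps Heps) as [delta Hdl]; exists delta; intros h Hh0 Hh;
  destruct (Hdl h Hh0 Hh) as (r & Hr & H1 & H2 & H3 & H4).
- rewrite H1.
  replace ((fst r - (p (x + h) - p x) * snd l) / h - - p' * snd l)
    with (fst r / h - snd l * ((p (x+h) - p x) / h - p')) by (field; auto).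
  eapply Rle_lt_trans; [apply Rabs_triang|]. rewrite Rabs_Ropp, Rabs_mult.
  assert (Hfr : Rabs (fst r / h) <= eps / 2).
  { unfold Rdiv. rewrite Rabs_mult, Rabs_inv.
    apply (Rmult_le_reg_r (Rabs h)); [apply Rabs_pos_lt; auto|].
    rewrite Rmult_assoc, Rinv_l by (apply Rabs_no_R0; auto). rewrite Rmult_1_r.
    eapply Rle_trans; [apply re_le_Cmod|]. eapply Rle_trans; [exact Hr|].
    replace (eps * / 2 * Rabs h) with (eps / (2 * B) * (B * Rabs h)) by (field; lra).
    apply Rmult_le_compat_l; [left; apply Rdiv_lt_0_compat; lra| exact H4]. }
  assert (Hs : Rabs (snd l) * Rabs ((p (x + h) - p x) / h - p') < eps / 2).
  { eapply Rle_lt_trans. apply Rmult_le_compat_r; [apply Rabs_pos|]. 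
    instantiate (1 := A). unfold A; generalize (Rabs_pos (fst l)); lra.
    replace (eps/2) with (A * (eps / (2 * A))) by (field; lra).
    apply Rmult_lt_compat_l; lra. }
  lra.
- rewrite H2.
  replace ((snd r + (p (x + h) - p x) * fst l) / h - p' * fst l)
    with (snd r / h + fst l * ((p (x+h) - p x) / h - p')) by (field; auto).
  eapply Rle_lt_trans; [apply Rabs_triang|]. rewrite Rabs_mult.
  assert (Hfr : Rabs (snd r / h) <= eps / 2).
  { unfold Rdiv. rewrite Rabs_mult, Rabs_inv.
    apply (Rmult_le_reg_r (Rabs h)); [apply Rabs_pos_lt; auto|].
    rewrite Rmult_assoc, Rinv_l by (apply Rabs_no_R0; auto). rewrite Rmult_1_r.
    eapply Rle_trans; [apply im_le_Cmod|]. eapply Rle_trans; [exact Hr|].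
    replace (eps * / 2 * Rabs h) with (eps / (2 * B) * (B * Rabs h)) by (field; lra).
    apply Rmult_le_compat_l; [left; apply Rdiv_lt_0_compat; lra| exact H4]. }
  assert (Hs : Rabs (fst l) * Rabs ((p (x + h) - p x) / h - p') < eps / 2).
  { eapply Rle_lt_trans. apply Rmult_le_compat_r; [apply Rabs_pos|]. 
    instantiate (1 := A). unfold A; generalize (Rabs_pos (snd l)); lra.
    replace (eps/2) with (A * (eps / (2 * A))) by (field; lra).
    apply Rmult_lt_compat_l; lra. }
  lra.
Qed.

Definition gA (k : nat) (g : C -> C) (y : R) : R := fst (Cderiv_n k g (0, y)).
Definition gB (k : nat) (g : C -> C) (y : R) : R := snd (Cderiv_n k g (0, y)).
Definition Dg (g : C -> C) := forall k y, -1 <= y <= 1 -> ex_derive (K:=C_AbsRing) (V:=C_NormedModule) (Cderiv_n k g) (0, y).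

Lemma dA k g y : Dg g -> -1 <= y <= 1 -> is_derive (gA k g) y (- gB (S k) g y).
Proof.
intros Hg Hy. apply is_derive_Reals.
destruct (chain (Cderiv_n k g) (fun y => y) y 1 (C_derive (Cderiv_n k g) (0, y)) (derivable_pt_lim_id y)) as [H _].
apply C_derive_correct; [exact (0,0)| apply Hg; auto].
unfold gA. replace (- gB (S k) g y) with (-1 * snd (C_derive (Cderiv_n k g) (0, y))) by (unfold gB; simpl; ring). exact H.
Qed.

Lemma dB k g y : Dg g -> -1 <= y <= 1 -> is_derive (gB k g) y (gA (S k) g y).
Proof.
intros Hg Hy. apply is_derive_Reals.
destruct (chain (Cderiv_n k g) (fun y => y) y 1 (C_derive (Cderiv_n k g) (0, y)) (derivable_pt_lim_id y)) as [_ H].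
apply C_derive_correct; [exact (0,0)| apply Hg; auto].
unfold gB. replace (gA (S k) g y) with (1 * fst (C_derive (Cderiv_n k g) (0, y))) by (unfold gA; simpl; ring). exact H.
Qed.

Definition Bf (v1 v2 a b C S : R) := - v1 * (C * b + S * a) - v2 * (C * a - S * b).
Definition Xf t a0 b0 a1 b1 C S := t*S*b0 - C*a1 - t*C*a0 + S*b1.
Definition Yf t a0 b0 a1 b1 C S := t*S*a0 + C*b1 + t*C*b0 + S*a1.
Definition Xpf t a0 b0 a1 b1 a2 b2 C S := -t^2*C*b0 - 2*t*S*a1 - C*b2 - t^2*S*a0 - 2*t*C*b1 - S*a2.
Definition Ypf t a0 b0 a1 b1 a2 b2 C S := -t^2*C*a0 + 2*t*S*b1 - C*a2 + t^2*S*b0 - 2*t*C*a1 + S*b2.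

Definition P1 t v1 v2 s c C S a0 b0 a1 b1 :=
  2 * s * c * Bf v1 v2 a0 b0 C S + s^2 * (s * (- v1 * Xf t a0 b0 a1 b1 C S - v2 * Yf t a0 b0 a1 b1 C S)).
Definition P2 t v1 v2 s c C S a0 b0 a1 b1 a2 b2 :=
  2 * (c^2 - s^2) * Bf v1 v2 a0 b0 C S
  + 4 * s * c * (s * (- v1 * Xf t a0 b0 a1 b1 C S - v2 * Yf t a0 b0 a1 b1 C S))
  + s^2 * (c * (- v1 * Xf t a0 b0 a1 b1 C S - v2 * Yf t a0 b0 a1 b1 C S)
           + s * (- v1 * (s * Xpf t a0 b0 a1 b1 a2 b2 C S) - v2 * (s * Ypf t a0 b0 a1 b1 a2 b2 C S))).

Definition psi g t v1 v2 x :=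
  sin x ^ 2 * Bf v1 v2 (gA 0 g (cos x)) (gB 0 g (cos x)) (cos (cos x * t)) (sin (cos x * t)).
Definition psi1 g t v1 v2 x :=
  P1 t v1 v2 (sin x) (cos x) (cos (cos x * t)) (sin (cos x * t))
     (gA 0 g (cos x)) (gB 0 g (cos x)) (gA 1 g (cos x)) (gB 1 g (cos x)).
Definition psi2 g t v1 v2 x :=
  P2 t v1 v2 (sin x) (cos x) (cos (cos x * t)) (sin (cos x * t))
     (gA 0 g (cos x)) (gB 0 g (cos x)) (gA 1 g (cos x)) (gB 1 g (cos x))
     (gA 2 g (cos x)) (gB 2 g (cos x)).

Ltac fixD Hg :=
  repeat match goal with
  | |- context [Derive (fun x0 => gA ?k ?g x0) ?y] =>
      replace (Derive (fun x0 => gA k g x0) y) with (- gB (S k) g y)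
        by (symmetry; apply is_derive_unique; apply dA; [exact Hg| apply COS_bound])
  | |- context [Derive (fun x0 => gB ?k ?g x0) ?y] =>
      replace (Derive (fun x0 => gB k g x0) y) with (gA (S k) g y)
        by (symmetry; apply is_derive_unique; apply dB; [exact Hg| apply COS_bound])
  end.

Ltac exD Hg :=
  repeat match goal with
  | |- _ /\ _ => split
  | |- True => exact I
  | |- ex_derive (fun x0 => gA ?k ?g x0) ?y => exact (ex_intro _ _ (dA k g y Hg (COS_bound _)))
  | |- ex_derive (fun x0 => gB ?k ?g x0) ?y => exact (ex_intro _ _ (dB k g y Hg (COS_bound _)))
  end.

Lemma psi_d g t v1 v2 x : Dg g -> is_derive (psi g t v1 v2) x (psi1 g t v1 v2 x).
Proof.
intros Hg. unfold psi, psi1, P1, Bf, Xf, Yf. auto_derive.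
- exD Hg.
- fixD Hg. ring.
Qed.

Lemma psi1_d g t v1 v2 x : Dg g -> is_derive (psi1 g t v1 v2) x (psi2 g t v1 v2 x).
Proof.
intros Hg. unfold psi1, psi2, P1, P2, Bf, Xf, Yf, Xpf, Ypf. auto_derive.
- exD Hg.
- fixD Hg. ring.
Qed.


Lemma ex_RInt_of_derive (phi phi1 : R -> R) a b :
  (forall x, Rmin a b <= x <= Rmax a b -> is_derive phi x (phi1 x)) -> ex_RInt phi a b.
Proof.
intros H. apply (ex_RInt_continuous (V:=R_CompleteNormedModule)). intros z Hz.
exact (ex_derive_continuous (K:=R_AbsRing) (V:=R_NormedModule) phi z (ex_intro _ _ (H z Hz))).
Qed.

Lemma midpoint (phi phi1 phi2 : R -> R) (c d M : R) :
  0 < d ->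
  (forall x, c - d <= x <= c + d -> is_derive phi x (phi1 x)) ->
  (forall x, c - d <= x <= c + d -> is_derive phi1 x (phi2 x)) ->
  (forall x, c - d <= x <= c + d -> Rabs (phi2 x) <= M) ->
  Rabs (RInt phi (c - d) (c + d) - 2 * d * phi c) <= d^3 / 3 * M.
Proof.
intros Hd H1 H2 HM.
assert (S1 : forall y, 0 <= y <= d -> Rabs (phi1 (c + y) - phi1 (c - y)) <= 2 * y * M).
{ intros y Hy.
  destruct (MVT_abs phi1 phi2 (c - y) (c + y)) as [xi [Hxi Hb]].
  { intros z Hz. apply is_derive_Reals. apply H2.
    rewrite Rmin_left, Rmax_right in Hz by lra. lra. }
  rewrite Hxi. rewrite Rmin_left, Rmax_right in Hb by lra.
  replace (c + y - (c - y)) with (2 * y) by ring. rewrite (Rabs_pos_eq (2*y)) by lra.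
  rewrite Rmult_comm. apply Rmult_le_compat_l; [lra|]. apply HM. lra. }
assert (S2 : forall x, 0 <= x <= d -> Rabs (phi (c + x) + phi (c - x) - 2 * phi c) <= M * x^2).
{ intros x Hx.
  destruct (Req_dec x 0) as [->|Hx0].
  { replace (c + 0) with c by ring. replace (c - 0) with c by ring.
    replace (phi c + phi c - 2 * phi c) with 0 by ring. rewrite Rabs_R0. 
    replace (M * 0^2) with 0 by ring. lra. }
  assert (gen : forall s, s = 1 \/ s = -1 -> s * (phi (c + x) + phi (c - x) - 2 * phi c) <= M * x^2).
  { intros s Hs.
    destruct (MVT_cor2 (fun y => s*(phi (c+y) + phi (c-y)) - M*y^2)
                (fun y => s*(phi1 (c+y) - phi1 (c-y)) - 2*M*y) 0 x) as [xi [Hxi Hb]].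
    { lra. }
    { intros y Hy. apply is_derive_Reals. auto_derive.
      - repeat split; eexists; apply H1; lra.
      - replace (Derive (fun x => phi x) (c+y)) with (phi1 (c+y)) by (symmetry; apply is_derive_unique; apply H1; lra).
        replace (Derive (fun x => phi x) (c+-y)) with (phi1 (c-y)).
        ring. symmetry; apply is_derive_unique; replace (c + - y) with (c - y) by ring; apply H1; lra. }
    assert (Hk : s * (phi1 (c + xi) - phi1 (c - xi)) - 2 * M * xi <= 0).
    { assert (T := S1 xi ltac:(lra)).
      destruct Hs as [-> | ->]; revert T; unfold Rabs; destruct Rcase_abs; intros; lra. }
    replace (c + 0) with c in Hxi by ring. replace (c - 0) with c in Hxi by ring.
    assert (Hp : (s * (phi1 (c + xi) - phi1 (c - xi)) - 2 * M * xi) * (x - 0) <= 0).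
    { apply Rmult_le_0_r; lra. }
    lra. }
  assert (A1 := gen 1 (or_introl eq_refl)). assert (A2 := gen (-1) (or_intror eq_refl)).
  unfold Rabs; destruct Rcase_abs; lra. }
assert (I1 : ex_RInt phi (c - d) c) by (apply (ex_RInt_of_derive phi phi1); intros; apply H1;
   rewrite Rmin_left, Rmax_right in H by lra; lra).
assert (I2 : ex_RInt phi c (c + d)) by (apply (ex_RInt_of_derive phi phi1); intros; apply H1;
   rewrite Rmin_left, Rmax_right in H by lra; lra).
assert (E1 : RInt phi c (c + d) = RInt (fun y => phi (c + y)) 0 d).
{ symmetry. rewrite (RInt_ext _ (fun y => scal 1 (phi (1 * y + c)))).
  rewrite (RInt_comp_lin (V:=R_CompleteNormedModule)).
  f_equal; ring.
  replace (1 * 0 + c) with c by ring. replace (1 * d + c) with (c+d) by ring. exact I2.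
  intros; unfold scal; simpl; unfold mult; simpl. rewrite Rmult_1_l. f_equal. ring. }
assert (E2 : RInt phi (c - d) c = RInt (fun y => phi (c - y)) 0 d).
{ symmetry. apply is_RInt_unique.
  assert (J : is_RInt phi (-1 * 0 + c) (-1 * d + c) (RInt phi c (c - d))).
  { replace (-1 * 0 + c) with c by ring. replace (-1 * d + c) with (c-d) by ring.
    apply (RInt_correct (V:=R_CompleteNormedModule)). apply ex_RInt_swap; exact I1. }
  apply is_RInt_comp_lin in J. apply (is_RInt_scal _ _ _ (-1)) in J.
  rewrite <- opp_RInt_swap by (apply ex_RInt_swap; exact I1).
  eapply is_RInt_ext; [|replace (opp (RInt phi c (c - d))) with (scal (-1) (RInt phi c (c - d))); [exact J|]].
  - intros x _. unfold scal; simpl; unfold mult; simpl. replace (-1 * x + c) with (c - x) by ring. ring.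
  - unfold scal, opp; simpl; unfold mult; simpl. ring. }
assert (Ip : ex_RInt (fun y => phi (c + y)) 0 d).
{ apply (ex_RInt_of_derive _ (fun y => phi1 (c + y))). intros y Hy. rewrite Rmin_left, Rmax_right in Hy by lra.
  auto_derive. eexists; apply H1; lra. rewrite Rmult_1_l. apply (is_derive_unique (fun x => phi x)); apply H1; lra. }
assert (Im : ex_RInt (fun y => phi (c - y)) 0 d).
{ apply (ex_RInt_of_derive _ (fun y => - phi1 (c - y))). intros y Hy. rewrite Rmin_left, Rmax_right in Hy by lra.
  auto_derive. eexists; replace (c + - y) with (c - y) by ring; apply H1; lra.
  replace (c + - y) with (c - y) by ring. replace (Derive (fun x => phi x) (c - y)) with (phi1 (c - y)) by (symmetry; apply is_derive_unique; apply H1; lra). ring. }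
rewrite <- (RInt_Chasles phi (c - d) c (c + d) I1 I2). rewrite E1, E2.
assert (Je : is_RInt (fun y => phi (c + y) + phi (c - y) - 2 * phi c) 0 d
          (RInt (fun y => phi (c - y)) 0 d + RInt (fun y => phi (c + y)) 0 d - 2 * d * phi c)).
{ apply (is_RInt_minus (V:=R_NormedModule)).
  rewrite Rplus_comm. apply (is_RInt_plus (V:=R_NormedModule)); apply (RInt_correct (V:=R_CompleteNormedModule)); assumption.
  replace (2 * d * phi c) with (scal (d - 0) (2 * phi c)) by (unfold scal; simpl; unfold mult; simpl; ring).
  apply (is_RInt_const (V:=R_NormedModule)). }
assert (Jm : is_RInt (fun y => M * y^2) 0 d (M * d^3 / 3)).
{ assert (e : M * d^3/3 = M * d^3/3 - M * 0^3/3) by field. rewrite e.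
  apply (is_RInt_derive (V:=R_CompleteNormedModule) (fun y => M * y^3/3)).
  intros; auto_derive; auto; field.
  intros x _. apply (continuous_ext (fun y => M * y^2)); [reflexivity|].
  apply (ex_derive_continuous (K:=R_AbsRing) (V:=R_NormedModule) (fun y => M * y^2)). auto_derive; auto. }
assert (T := norm_RInt_le (V:=R_NormedModule) _ _ 0 d _ _ (Rlt_le _ _ Hd) (fun x Hx => S2 x Hx) Je Jm).
change (Rabs (RInt (fun y : R => phi (c - y)) 0 d + RInt (fun y : R => phi (c + y)) 0 d - 2 * d * phi c) <= M * d ^ 3 / 3) in T.
replace (d^3/3*M) with (M * d^3/3) by field. exact T.
Qed.


Definition P2w t v1 v2 w c C S a0 b0 a1 b1 a2 b2 :=
  2 * (c^2 - w) * Bf v1 v2 a0 b0 C S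
  + 4 * w * c * (- v1 * Xf t a0 b0 a1 b1 C S - v2 * Yf t a0 b0 a1 b1 C S)
  + w * (c * (- v1 * Xf t a0 b0 a1 b1 C S - v2 * Yf t a0 b0 a1 b1 C S)
           + w * (- v1 * Xpf t a0 b0 a1 b1 a2 b2 C S - v2 * Ypf t a0 b0 a1 b1 a2 b2 C S)).

Lemma psi2_E g t v1 v2 x : psi2 g t v1 v2 x = v1 * snd (Efun g t (0, cos x)) + v2 * fst (Efun g t (0, cos x)).
Proof.
unfold psi2.
assert (E : forall s c C S a0 b0 a1 b1 a2 b2, P2 t v1 v2 s c C S a0 b0 a1 b1 a2 b2 = P2w t v1 v2 (s^2) c C S a0 b0 a1 b1 a2 b2)
  by (intros; unfold P2, P2w; ring).
rewrite E. clear E.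
replace (sin x ^ 2) with (1 - cos x ^ 2) by (generalize (sin2_cos2 x); unfold Rsqr; intros; nra).
unfold P2w, Bf, Xf, Yf, Xpf, Ypf, gA, gB, Efun.
change (g (0, cos x)) with (Cderiv_n 0 g (0, cos x)).
change (C_derive g (0, cos x)) with (Cderiv_n 1 g (0, cos x)).
change (C_derive (C_derive g) (0, cos x)) with (Cderiv_n 2 g (0, cos x)).
destruct (Cderiv_n 0 g (0, cos x)) as [a0 b0].
destruct (Cderiv_n 1 g (0, cos x)) as [a1 b1].
destruct (Cderiv_n 2 g (0, cos x)) as [a2 b2].
unfold Cexp. cbn [fst snd Cmult Cplus Cpow RtoC Re Im].
replace (0 * t - cos x * 0) with 0 by ring. rewrite exp_0.
replace (0 * 0 + cos x * t) with (cos x * t) by ring.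
set (c := cos x). set (CC := cos (c * t)). set (SS := sin (c * t)).
ring.
Qed.


Lemma cont_mult (f g : R -> R) x : continuous f x -> continuous g x -> continuous (fun y => f y * g y) x.
Proof. intros. apply (continuous_mult (K:=R_AbsRing) f g); auto. Qed.

Ltac exD2 Hg :=
  repeat match goal with
  | |- _ /\ _ => split
  | |- True => exact I
  | |- ex_derive (fun x0 => gA ?k ?g x0) ?y => exact (ex_intro _ _ (dA k g y Hg ltac:(lra)))
  | |- ex_derive (fun x0 => gB ?k ?g x0) ?y => exact (ex_intro _ _ (dB k g y Hg ltac:(lra)))
  end.

Definition Rv g t v1 v2 s := 2 * sqrt (1 - (2*s-1)^2) *
  Bf v1 v2 (gA 0 g (2*s-1)) (gB 0 g (2*s-1)) (cos ((2*s-1)*t)) (sin ((2*s-1)*t)).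

Lemma Rv_cont g t v1 v2 s : Dg g -> 0 <= s <= 1 -> continuous (Rv g t v1 v2) s.
Proof.
intros Hg Hs. unfold Rv. apply cont_mult; [apply cont_mult|].
- apply continuous_const.
- apply continuous_sqrt_comp.
  apply (ex_derive_continuous (K:=R_AbsRing) (V:=R_NormedModule) (fun s => 1 - (2*s-1)^2)). auto_derive. auto.
- apply (ex_derive_continuous (K:=R_AbsRing) (V:=R_NormedModule)). unfold Bf. auto_derive. exD2 Hg.
Qed.

Lemma psi_cont g t v1 v2 x : Dg g -> continuous (psi g t v1 v2) x.
Proof.
intros Hg. apply (ex_derive_continuous (K:=R_AbsRing) (V:=R_NormedModule)). eexists. apply psi_d. exact Hg.
Qed.

Lemma subst g t v1 v2 : Dg g -> RInt (Rv g t v1 v2) 0 1 = RInt (psi g t v1 v2) 0 PI.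
Proof.
intros Hg.
assert (H := RInt_comp (V:=R_CompleteNormedModule) (Rv g t v1 v2) (fun x => (1 + cos x)/2) (fun x => - sin x / 2) PI 0).
cbv beta in H. rewrite cos_PI, cos_0 in H.
replace ((1 + -1)/2) with 0 in H by field. replace ((1+1)/2) with 1 in H by field.
rewrite <- H; clear H.
- rewrite <- opp_RInt_swap.
  2: { apply (ex_RInt_continuous (V:=R_CompleteNormedModule)). intros z Hz.
       apply (cont_mult (fun y => - sin y / 2) (fun y => Rv g t v1 v2 ((1 + cos y)/2))).
       apply (ex_derive_continuous (K:=R_AbsRing) (V:=R_NormedModule)). auto_derive. auto.
       apply (continuous_comp (fun y => (1 + cos y)/2) (Rv g t v1 v2)).
       apply (ex_derive_continuous (K:=R_AbsRing) (V:=R_NormedModule)). auto_derive. auto.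
       apply Rv_cont; auto. generalize (COS_bound z). split; lra. }
  rewrite <- RInt_opp.
  2: { apply (ex_RInt_continuous (V:=R_CompleteNormedModule)). intros z Hz.
       apply (cont_mult (fun y => - sin y / 2) (fun y => Rv g t v1 v2 ((1 + cos y)/2))).
       apply (ex_derive_continuous (K:=R_AbsRing) (V:=R_NormedModule)). auto_derive. auto.
       apply (continuous_comp (fun y => (1 + cos y)/2) (Rv g t v1 v2)).
       apply (ex_derive_continuous (K:=R_AbsRing) (V:=R_NormedModule)). auto_derive. auto.
       apply Rv_cont; auto. generalize (COS_bound z). split; lra. }
  apply RInt_ext. intros x Hx. rewrite Rmin_left, Rmax_right in Hx by (generalize PI_RGT_0; lra).
  unfold opp, scal; simpl; unfold mult; simpl. unfold Rv, psi.
  replace (2 * ((1 + cos x) / 2) - 1) with (cos x) by field.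
  replace (1 - cos x ^ 2) with (sin x ^ 2) by (generalize (sin2_cos2 x); unfold Rsqr; intros; nra).
  rewrite sqrt_pow2 by (left; apply sin_gt_0; lra).
  field.
- intros x Hx. cbv beta. apply Rv_cont; auto. generalize (COS_bound x). split; lra.
- intros x Hx. split.
  + auto_derive; auto. field.
  + apply (ex_derive_continuous (K:=R_AbsRing) (V:=R_NormedModule)). auto_derive. auto.
Qed.


Lemma Csqrt_real (a : R) : 0 <= a -> Csqrt (a, 0) = (sqrt a, 0).
Proof.
intros Ha. unfold Csqrt. simpl.
assert (Hm : Cmod (a, 0) = a).
{ unfold Cmod. simpl. replace (a * (a * 1) + 0 * (0 * 1)) with (a * a) by ring. apply sqrt_square; auto. }
rewrite Hm. replace ((a + a) / 2) with a by field. replace ((a - a)/2) with 0 by field.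
rewrite sqrt_0. f_equal. ring.
Qed.

Definition integrand (g : C -> C) (t : R) (s : R) : C :=
  Cmult ((fun z => Cmult (Cmult (Csqrt (Cplus (RtoC 1) (Cmult z z))) (Cexp (Cmult z (RtoC t)))) (g z))
           (Cplus (Copp Ci) (Cmult (RtoC s) (Cminus Ci (Copp Ci))))) (Cminus Ci (Copp Ci)).

Lemma integrand_eq g t s : 0 <= s <= 1 -> integrand g t s = (Rv g t 1 0 s, Rv g t 0 (-1) s).
Proof.
intros Hs. unfold integrand.
replace (Cplus (Copp Ci) (Cmult (RtoC s) (Cminus Ci (Copp Ci)))) with ((0, 2*s-1) : C)
  by (unfold Ci, Cplus, Copp, Cmult, Cminus, RtoC; simpl; f_equal; ring).
replace (Cminus Ci (Copp Ci)) with ((0, 2) : C) by (unfold Ci, Copp, Cminus, Cplus; simpl; f_equal; ring).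
replace (Cplus (RtoC 1) (Cmult (0, 2 * s - 1) (0, 2 * s - 1))) with ((1 - (2*s-1)^2, 0) : C)
  by (unfold Cplus, Cmult, RtoC; simpl; f_equal; ring).
rewrite Csqrt_real by nra.
replace (Cexp (Cmult (0, 2 * s - 1) (RtoC t))) with ((cos ((2*s-1)*t), sin ((2*s-1)*t)) : C)
  by (unfold Cexp, Cmult, RtoC; simpl; replace (0 * t - (2 * s - 1) * 0) with 0 by ring; rewrite exp_0;
      replace (0 * 0 + (2 * s - 1) * t) with ((2*s-1)*t) by ring; f_equal; ring).
unfold Rv, Bf, gA, gB. change (Cderiv_n 0 g (0, 2 * s - 1)) with (g (0, 2*s-1)).
destruct (g (0, 2*s-1)) as [a b]. unfold Cmult, RtoC. simpl. f_equal; ring.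
Qed.

Lemma seg_eq g t : Dg g ->
  seg_integral (fun z => Cmult (Cmult (Csqrt (Cplus (RtoC 1) (Cmult z z))) (Cexp (Cmult z (RtoC t)))) (g z))
               (Copp Ci) Ci = (RInt (psi g t 1 0) 0 PI, RInt (psi g t 0 (-1)) 0 PI).
Proof.
intros Hg. unfold seg_integral. rewrite <- !subst by exact Hg.
apply (is_RInt_unique (V:=C_R_CompleteNormedModule)).
change (is_RInt (V:=C_R_CompleteNormedModule) (integrand g t) 0 1 (RInt (Rv g t 1 0) 0 1, RInt (Rv g t 0 (-1)) 0 1)).
apply (is_RInt_fct_extend_pair (U:=R_NormedModule) (V:=R_NormedModule)).
- apply (is_RInt_ext (Rv g t 1 0)).
  + intros x Hx. rewrite Rmin_left, Rmax_right in Hx by lra. rewrite integrand_eq by lra. reflexivity.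
  + apply (RInt_correct (V:=R_CompleteNormedModule)). apply (ex_RInt_continuous (V:=R_CompleteNormedModule)).
    intros z Hz. rewrite Rmin_left, Rmax_right in Hz by lra. apply Rv_cont; auto.
- apply (is_RInt_ext (Rv g t 0 (-1))).
  + intros x Hx. rewrite Rmin_left, Rmax_right in Hx by lra. rewrite integrand_eq by lra. reflexivity.
  + apply (RInt_correct (V:=R_CompleteNormedModule)). apply (ex_RInt_continuous (V:=R_CompleteNormedModule)).
    intros z Hz. rewrite Rmin_left, Rmax_right in Hz by lra. apply Rv_cont; auto.
Qed.


Lemma abs_le_sqrt x y : x^2 <= y -> Rabs x <= sqrt y.
Proof. intros H. rewrite <- sqrt_Rsqr_abs. apply sqrt_le_1_alt. unfold Rsqr. lra. Qed.

Lemma Bf_bound v1 v2 a b C S : v1^2+v2^2 = 1 -> C^2+S^2 = 1 -> Rabs (Bf v1 v2 a b C S) <= sqrt (a^2+b^2).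
Proof.
intros Hv HC. apply abs_le_sqrt. unfold Bf.
set (p := v1*S+v2*C). set (q := v1*C - v2*S).
assert (Hpq : p^2 + q^2 = 1) by (replace (p^2+q^2) with ((v1^2+v2^2)*(C^2+S^2)) by (unfold p,q; ring); rewrite Hv, HC; ring).
replace ((- v1 * (C * b + S * a) - v2 * (C * a - S * b))) with (- (p*a + q*b)) by (unfold p, q; ring).
assert (E : (p*a+q*b)^2 + (p*b - q*a)^2 = (p^2+q^2)*(a^2+b^2)) by ring.
rewrite Hpq, Rmult_1_l in E. replace ((- (p*a+q*b))^2) with ((p*a+q*b)^2) by ring.
generalize (pow2_ge_0 (p*b-q*a)). lra.
Qed.

Lemma psi_bound g t v1 v2 x : v1^2+v2^2 = 1 ->
  Rabs (psi g t v1 v2 x) <= sin x ^2 * Cmod (g (0, cos x)).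
Proof.
intros Hv. unfold psi. rewrite Rabs_mult. rewrite (Rabs_pos_eq (sin x ^2)) by nra.
apply Rmult_le_compat_l; [nra|]. unfold Cmod.
apply Bf_bound; auto. generalize (sin2_cos2 (cos x * t)); unfold Rsqr; intros; nra.
Qed.

Lemma psi2_bound g t v1 v2 x : v1^2+v2^2 = 1 ->
  Rabs (psi2 g t v1 v2 x) <= Cmod (Efun g t (0, cos x)).
Proof.
intros Hv. rewrite psi2_E. unfold Cmod. apply abs_le_sqrt.
set (e1 := fst (Efun g t (0, cos x))). set (e2 := snd (Efun g t (0, cos x))).
assert (E : (v1*e2+v2*e1)^2 + (v1*e1 - v2*e2)^2 = (v1^2+v2^2)*(e1^2+e2^2)) by ring.
rewrite Hv, Rmult_1_l in E. generalize (pow2_ge_0 (v1*e1 - v2*e2)). lra.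
Qed.

Lemma dtheta_pos n : 0 < dtheta n.
Proof. unfold dtheta. apply Rdiv_lt_0_compat; [apply PI_RGT_0|]. apply Rmult_lt_0_compat; [lra|]. apply lt_0_INR; lia. Qed.

Lemma theta_eq n j : theta n j = 2 * INR j * dtheta n.
Proof. unfold theta, dtheta. field. apply not_0_INR. lia. Qed.

Lemma PI_eq n : PI = 2 * INR (n+1) * dtheta n.
Proof. unfold dtheta. field. apply not_0_INR. lia. Qed.

Lemma psi_RInt g t v1 v2 a b : Dg g -> ex_RInt (psi g t v1 v2) a b.
Proof. intros Hg. apply (ex_RInt_continuous (V:=R_CompleteNormedModule)). intros; apply psi_cont; auto. Qed.


Lemma is_RInt_sq1 M d : is_RInt (fun y => M * y^2) 0 d (M * d^3 / 3).
Proof.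
assert (e : M * d^3/3 = M * d^3/3 - M * 0^3/3) by field. rewrite e.
apply (is_RInt_derive (V:=R_CompleteNormedModule) (fun y => M * y^3/3)).
- intros; auto_derive; auto; field.
- intros x _. apply (ex_derive_continuous (K:=R_AbsRing) (V:=R_NormedModule) (fun y => M * y^2)). auto_derive; auto.
Qed.

Lemma is_RInt_sq2 M b d : is_RInt (fun y => M * (b - y)^2) (b - d) b (M * d^3 / 3).
Proof.
assert (e : M * d^3/3 = (- M * (b - b)^3/3) - (- M * (b - (b - d))^3/3)) by field. rewrite e.
apply (is_RInt_derive (V:=R_CompleteNormedModule) (fun y => - M * (b - y)^3/3)).
- intros; auto_derive; auto; field.
- intros x _. apply (ex_derive_continuous (K:=R_AbsRing) (V:=R_NormedModule) (fun y => M * (b - y)^2)). auto_derive; auto.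
Qed.

Lemma cos_le x y : 0 <= x -> x <= y -> y <= PI -> cos y <= cos x.
Proof.
intros. destruct (Req_dec x y) as [->|]; [lra|]. left. apply cos_decreasing_1; lra.
Qed.

Lemma dtheta_le n : dtheta n <= PI / 2.
Proof.
unfold dtheta. apply Rmult_le_compat_l; [left; apply PI_RGT_0|].
apply Rinv_le_contravar; [lra|]. assert (1 <= INR (n+1)) by (apply (le_INR 1); lia). lra.
Qed.

Lemma end_left g t v1 v2 n M1 : Dg g -> v1^2+v2^2 = 1 ->
  (forall z, on_iseg (cos (dtheta n)) 1 z -> Cmod (g z) <= M1) ->
  Rabs (RInt (psi g t v1 v2) 0 (dtheta n)) <= dtheta n ^ 3 / 3 * M1.
Proof.
intros Hg Hv HM.
assert (Hd := dtheta_pos n). assert (Hd2 := dtheta_le n). assert (HP := PI_RGT_0).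
replace (dtheta n ^ 3 / 3 * M1) with (M1 * dtheta n ^3 / 3) by field.
apply (norm_RInt_le (V:=R_NormedModule) (psi g t v1 v2) (fun y => M1 * y^2) 0 (dtheta n)).
- lra.
- intros x Hx. change (Rabs (psi g t v1 v2 x) <= M1 * x^2).
  eapply Rle_trans; [apply psi_bound; auto|].
  assert (Hg1 : Cmod (g (0, cos x)) <= M1).
  { apply HM. split; [reflexivity|]. simpl. split; [|apply COS_bound].
    apply cos_le; lra. }
  assert (Hs0 : 0 <= sin x) by (apply sin_ge_0; lra).
  assert (Hs1 : sin x <= x) by (destruct (Req_dec x 0) as [->|]; [rewrite sin_0; lra| left; apply sin_lt_x; lra]).
  assert (0 <= Cmod (g (0, cos x))) by apply Cmod_ge_0.
  assert (sin x ^2 <= x^2) by nra.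
  nra.
- apply (RInt_correct (V:=R_CompleteNormedModule)). apply psi_RInt; auto.
- apply is_RInt_sq1.
Qed.

Lemma end_right g t v1 v2 n M2 : Dg g -> v1^2+v2^2 = 1 ->
  (forall z, on_iseg (-1) (- cos (dtheta n)) z -> Cmod (g z) <= M2) ->
  Rabs (RInt (psi g t v1 v2) (PI - dtheta n) PI) <= dtheta n ^ 3 / 3 * M2.
Proof.
intros Hg Hv HM.
assert (Hd := dtheta_pos n). assert (Hd2 := dtheta_le n). assert (HP := PI_RGT_0).
replace (dtheta n ^ 3 / 3 * M2) with (M2 * dtheta n ^3 / 3) by field.
apply (norm_RInt_le (V:=R_NormedModule) (psi g t v1 v2) (fun y => M2 * (PI - y)^2) (PI - dtheta n) PI).
- lra.
- intros x Hx. change (Rabs (psi g t v1 v2 x) <= M2 * (PI - x)^2).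
  eapply Rle_trans; [apply psi_bound; auto|].
  assert (Hg1 : Cmod (g (0, cos x)) <= M2).
  { apply HM. split; [reflexivity|]. simpl. split; [apply COS_bound|].
    replace (- cos (dtheta n)) with (cos (PI - dtheta n)) by (rewrite cos_minus, cos_PI, sin_PI; ring).
    apply cos_le; lra. }
  assert (Hs0 : 0 <= sin x) by (apply sin_ge_0; lra).
  assert (Hs1 : sin x <= PI - x).
  { rewrite <- (sin_PI_x x). destruct (Req_dec x PI) as [->|].
    - replace (PI - PI) with 0 by ring. rewrite sin_0; lra.
    - left; apply sin_lt_x; lra. }
  assert (0 <= Cmod (g (0, cos x))) by apply Cmod_ge_0.
  assert (sin x ^2 <= (PI - x)^2) by nra.
  nra.
- apply (RInt_correct (V:=R_CompleteNormedModule)). apply psi_RInt; auto.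
- apply is_RInt_sq2.
Qed.


Lemma cell g t v1 v2 n Mj j : Dg g -> v1^2+v2^2 = 1 -> (1 <= j <= n)%nat ->
  (forall j z, (1 <= j <= n)%nat ->
     on_iseg (cos (theta n j + dtheta n)) (cos (theta n j - dtheta n)) z ->
     Cmod (Efun g t z) <= Mj j) ->
  Rabs (RInt (psi g t v1 v2) (theta n j - dtheta n) (theta n j + dtheta n) - 2 * dtheta n * psi g t v1 v2 (theta n j))
   <= dtheta n ^ 3 / 3 * Mj j.
Proof.
intros Hg Hv Hj HM.
assert (Hd := dtheta_pos n).
assert (Hj1 : 1 <= INR j) by (apply (le_INR 1); lia).
assert (Hj2 : INR j <= INR n) by (apply le_INR; lia).
apply (midpoint _ (psi1 g t v1 v2) (psi2 g t v1 v2)).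
- exact Hd.
- intros; apply psi_d; auto.
- intros; apply psi1_d; auto.
- intros x Hx. eapply Rle_trans; [apply psi2_bound; auto|]. apply HM; auto.
  split; [reflexivity|]. simpl. rewrite theta_eq in *.
  assert (HP : PI = 2 * (INR n + 1) * dtheta n) by (rewrite (PI_eq n), plus_INR; simpl; ring).
  split; apply cos_le; nra.
Qed.

Lemma cells g t v1 v2 n Mj : Dg g -> v1^2+v2^2 = 1 ->
  (forall j z, (1 <= j <= n)%nat ->
     on_iseg (cos (theta n j + dtheta n)) (cos (theta n j - dtheta n)) z ->
     Cmod (Efun g t z) <= Mj j) ->
  forall m, (m <= n)%nat ->
  Rabs (RInt (psi g t v1 v2) (dtheta n) (theta n m + dtheta n)
        - 2 * dtheta n * rsum1 (fun j => psi g t v1 v2 (theta n j)) m)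
   <= dtheta n ^ 3 / 3 * rsum1 Mj m.
Proof.
intros Hg Hv HM m. induction m as [|m IH]; intros Hm.
- simpl. rewrite theta_eq. simpl. replace (2 * 0 * dtheta n + dtheta n) with (dtheta n) by ring.
  rewrite RInt_point. unfold zero; simpl. replace (0 - 2 * dtheta n * 0) with 0 by ring.
  rewrite Rabs_R0. lra.
- simpl rsum1.
  rewrite <- (RInt_Chasles (V:=R_CompleteNormedModule) _ _ (theta n m + dtheta n)) by (apply psi_RInt; auto).
  change plus with Rplus.
  assert (Ht : theta n m + dtheta n = theta n (S m) - dtheta n) by (rewrite !theta_eq, S_INR; ring).
  rewrite Ht at 2.
  assert (C1 := cell g t v1 v2 n Mj (S m) Hg Hv ltac:(lia) HM).
  assert (C2 := IH ltac:(lia)).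
  set (a := RInt (psi g t v1 v2) (dtheta n) (theta n m + dtheta n)) in *.
  set (b := RInt (psi g t v1 v2) (theta n (S m) - dtheta n) (theta n (S m) + dtheta n)) in *.
  replace (a + b - 2 * dtheta n * (rsum1 (fun j : nat => psi g t v1 v2 (theta n j)) m + psi g t v1 v2 (theta n (S m))))
    with ((a - 2 * dtheta n * rsum1 (fun j : nat => psi g t v1 v2 (theta n j)) m) + (b - 2 * dtheta n * psi g t v1 v2 (theta n (S m)))) by ring.
  eapply Rle_trans; [apply Rabs_triang|]. lra.
Qed.

Lemma main_real g t v1 v2 n M1 M2 Mj : Dg g -> v1^2+v2^2 = 1 -> (1 <= n)%nat ->
  (forall z, on_iseg (cos (dtheta n)) 1 z -> Cmod (g z) <= M1) ->
  (forall z, on_iseg (-1) (- cos (dtheta n)) z -> Cmod (g z) <= M2) ->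
  (forall j z, (1 <= j <= n)%nat ->
     on_iseg (cos (theta n j + dtheta n)) (cos (theta n j - dtheta n)) z ->
     Cmod (Efun g t z) <= Mj j) ->
  Rabs (RInt (psi g t v1 v2) 0 PI - 2 * dtheta n * rsum1 (fun j => psi g t v1 v2 (theta n j)) n)
   <= dtheta n ^ 3 / 3 * (M1 + M2 + rsum1 Mj n).
Proof.
intros Hg Hv Hn H1 H2 HM.
assert (A := cells g t v1 v2 n Mj Hg Hv HM n (le_n n)).
assert (B1 := end_left g t v1 v2 n M1 Hg Hv H1).
assert (B2 := end_right g t v1 v2 n M2 Hg Hv H2).
assert (Ht : theta n n + dtheta n = PI - dtheta n) by (rewrite theta_eq, (PI_eq n), plus_INR; simpl; ring).
rewrite Ht in A.
rewrite <- (RInt_Chasles (V:=R_CompleteNormedModule) _ 0 (PI - dtheta n) PI) by (apply psi_RInt; auto).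
rewrite <- (RInt_Chasles (V:=R_CompleteNormedModule) _ 0 (dtheta n) (PI - dtheta n)) by (apply psi_RInt; auto).
change plus with Rplus.
set (S := rsum1 (fun j : nat => psi g t v1 v2 (theta n j)) n) in *.
set (a := RInt (psi g t v1 v2) 0 (dtheta n)) in *.
set (b := RInt (psi g t v1 v2) (dtheta n) (PI - dtheta n)) in *.
set (c := RInt (psi g t v1 v2) (PI - dtheta n) PI) in *.
replace (a + b + c - 2 * dtheta n * S) with (a + (b - 2 * dtheta n * S) + c) by ring.
eapply Rle_trans; [apply Rabs_triang|].
eapply Rle_trans; [apply Rplus_le_compat_r; apply Rabs_triang|].
lra.
Qed.


Lemma Dg_of g : analytic_near_iseg g -> Dg g.
Proof.
intros [U [_ [HU HD]]] k y Hy. apply HD. apply HU. split; [reflexivity|]. simpl. lra.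
Qed.

Lemma sum_eq g t n : forall m,
  Cmult Ci (csum1 (fun j => Cmult (Cmult (g (zpt n j)) (Cexp (Cmult (zpt n j) (RtoC t)))) (RtoC (alpha n j))) m)
  = (rsum1 (fun j => psi g t 1 0 (theta n j)) m / INR (n + 1),
     rsum1 (fun j => psi g t 0 (-1) (theta n j)) m / INR (n + 1)).
Proof.
assert (HN : INR (n+1) <> 0) by (apply not_0_INR; lia).
induction m as [|m IH].
- simpl. unfold Cmult, Ci, RtoC; simpl. f_equal; field; auto.
- simpl csum1. simpl rsum1. rewrite Cmult_plus_distr_l, IH.
  replace (zpt n (S m)) with ((0, cos (theta n (S m))) : C) by (unfold zpt, Ci, Cmult, RtoC; simpl; f_equal; ring).
  unfold psi, Bf, gA, gB, alpha, Cexp. change (Cderiv_n 0 g (0, cos (theta n (S m)))) with (g (0, cos (theta n (S m)))).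
  destruct (g (0, cos (theta n (S m)))) as [a b].
  unfold Cmult, Cplus, Ci, RtoC; simpl.
  replace (0 * t - cos (theta n (S m)) * 0) with 0 by ring. rewrite exp_0.
  replace (0 * 0 + cos (theta n (S m)) * t) with (cos (theta n (S m)) * t) by ring.
  f_equal; field; auto.
Qed.

Lemma rsum1_lin (f h : nat -> R) a b m : rsum1 (fun j => a * f j - b * h j) m = a * rsum1 f m - b * rsum1 h m.
Proof. induction m; simpl; [ring|]. rewrite IHm. ring. Qed.

Lemma rsum1_ext (f h : nat -> R) m : (forall j, f j = h j) -> rsum1 f m = rsum1 h m.
Proof. intros E; induction m; simpl; auto. rewrite IHm, E. auto. Qed.

Lemma psi_lin g t v1 v2 x : psi g t v1 v2 x = v1 * psi g t 1 0 x - v2 * psi g t 0 (-1) x.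
Proof. unfold psi, Bf. ring. Qed.

Lemma RInt_lin g t v1 v2 : Dg g ->
  RInt (psi g t v1 v2) 0 PI = v1 * RInt (psi g t 1 0) 0 PI - v2 * RInt (psi g t 0 (-1)) 0 PI.
Proof.
intros Hg. apply (is_RInt_unique (V:=R_CompleteNormedModule)).
eapply (is_RInt_ext (V:=R_NormedModule)).
2: { apply (is_RInt_minus (V:=R_NormedModule)); apply (is_RInt_scal (V:=R_NormedModule));
     apply (RInt_correct (V:=R_CompleteNormedModule)); apply psi_RInt; auto. }
intros x _. rewrite (psi_lin g t v1 v2 x). unfold minus, plus, opp, scal; simpl; unfold mult; simpl. ring.
Qed.

Theorem proposition2 (K t : R) (n : nat) (g : C -> C)
  (M1 M2 : R) (Mj : nat -> R) :
  0 < K -> 0 <= t -> (1 <= n)%nat ->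
  analytic_near_iseg g ->
  (forall z, on_iseg (cos (dtheta n)) 1 z -> Cmod (g z) <= M1) ->
  (forall z, on_iseg (-1) (- cos (dtheta n)) z -> Cmod (g z) <= M2) ->
  (forall j z, (1 <= j <= n)%nat ->
     on_iseg (cos (theta n j + dtheta n)) (cos (theta n j - dtheta n)) z ->
     Cmod (Efun g t z) <= Mj j) ->
  Cmod (Cminus
    (Cmult (RtoC (2 * K))
       (seg_integral (fun z => Cmult (Cmult (Csqrt (Cplus (RtoC 1) (Cmult z z)))
                                            (Cexp (Cmult z (RtoC t)))) (g z))
                     (Copp Ci) Ci))
    (Cmult (Cmult (RtoC (2 * PI * K)) Ci)
       (csum1 (fun j => Cmult (Cmult (g (zpt n j)) (Cexp (Cmult (zpt n j) (RtoC t))))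
                              (RtoC (alpha n j))) n)))
  <= 2 / 3 * K * (dtheta n) ^ 3 * (3 * M1 + 3 * M2 + rsum1 Mj n).
Proof.
intros HK Ht Hn Ha H1 H2 HM.
assert (Hg := Dg_of g Ha).
assert (Hd := dtheta_pos n).
assert (HM1 : 0 <= M1).
{ eapply Rle_trans; [apply Cmod_ge_0| apply (H1 (0,1))]. split; [reflexivity|]. simpl. generalize (COS_bound (dtheta n)); lra. }
assert (HM2 : 0 <= M2).
{ eapply Rle_trans; [apply Cmod_ge_0| apply (H2 (0,-1))]. split; [reflexivity|]. simpl. generalize (COS_bound (dtheta n)); lra. }
rewrite seg_eq by exact Hg.
rewrite <- Cmult_assoc, sum_eq.
set (A1 := RInt (psi g t 1 0) 0 PI). set (A2 := RInt (psi g t 0 (-1)) 0 PI).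
set (S1 := rsum1 (fun j => psi g t 1 0 (theta n j)) n).
set (S2 := rsum1 (fun j => psi g t 0 (-1) (theta n j)) n).
assert (HPI : PI / INR (n+1) = 2 * dtheta n) by (unfold dtheta; field; apply not_0_INR; lia).
set (D1 := A1 - 2 * dtheta n * S1). set (D2 := A2 - 2 * dtheta n * S2).
set (Bd := dtheta n ^ 3 / 3 * (M1 + M2 + rsum1 Mj n)).
assert (HL : Cminus (Cmult (RtoC (2 * K)) (A1, A2)) (Cmult (RtoC (2 * PI * K)) (S1 / INR (n + 1), S2 / INR (n + 1)))
            = ((2 * K * D1, 2 * K * D2) : C)).
{ unfold Cminus, Cmult, Cplus, Copp, RtoC; simpl. unfold D1, D2. rewrite <- HPI. f_equal; field; apply not_0_INR; lia. }
rewrite HL.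
assert (Hr : sqrt (D1^2 + D2^2) <= Bd).
{ set (r := sqrt (D1^2 + D2^2)).
  assert (Hr0 : 0 <= r) by apply sqrt_pos.
  destruct (Req_dec r 0) as [Hz|Hnz].
  - rewrite Hz. unfold Bd. assert (0 <= rsum1 Mj n).
    { clear -HM Hn. assert (forall m, (m <= n)%nat -> 0 <= rsum1 Mj m).
      { induction m; intros Hm; simpl; [lra|].
        assert (0 <= Mj (S m)).
        { eapply Rle_trans; [apply Cmod_ge_0| apply (HM (S m) (0, cos (theta n (S m))))]. lia.
          split; [reflexivity|]. simpl. rewrite !theta_eq.
          assert (Hd := dtheta_pos n).
          assert (Hj1 : 1 <= INR (S m)) by (apply (le_INR 1); lia).
          assert (Hj2 : INR (S m) <= INR n) by (apply le_INR; lia).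
          assert (HP : PI = 2 * (INR n + 1) * dtheta n) by (rewrite (PI_eq n), plus_INR; simpl; ring).
          split; apply cos_le; nra. }
        specialize (IHm ltac:(lia)). lra. }
      apply H; lia. }
    apply Rmult_le_pos; [|lra]. apply Rmult_le_pos; [|lra]. apply pow_le; lra.
  - assert (Hrp : 0 < r) by lra.
    assert (Hr2 : r * r = D1^2 + D2^2) by (apply sqrt_sqrt; nra).
    assert (Hv : (D1 / r)^2 + (- D2 / r)^2 = 1) by (field_simplify; [rewrite <- Hr2; field|]; lra).
    assert (Mr := main_real g t (D1 / r) (- D2 / r) n M1 M2 Mj Hg Hv Hn H1 H2 HM).
    rewrite RInt_lin in Mr by exact Hg.
    rewrite (rsum1_ext _ (fun j => D1 / r * psi g t 1 0 (theta n j) - - D2 / r * psi g t 0 (-1) (theta n j))) in Mr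
      by (intros; apply psi_lin).
    rewrite rsum1_lin in Mr. fold A1 A2 S1 S2 in Mr.
    replace (D1 / r * A1 - - D2 / r * A2 - 2 * dtheta n * (D1 / r * S1 - - D2 / r * S2)) with r in Mr.
    + exact (Rle_trans _ _ _ (Rle_abs r) Mr).
    + apply (Rmult_eq_reg_l r); [|lra]. field_simplify; [|lra].
      replace (r^2) with (r*r) by ring. rewrite Hr2. unfold D1, D2. ring. }
unfold Cmod; cbn [fst snd].
replace ((2 * K * D1) ^ 2 + (2 * K * D2) ^ 2) with ((2*K)^2 * (D1^2 + D2^2)) by ring.
rewrite sqrt_mult_alt by nra. rewrite sqrt_pow2 by lra.
unfold Bd in Hr.
assert (0 <= dtheta n ^ 3) by (apply pow_le; lra).
eapply Rle_trans; [apply Rmult_le_compat_l; [lra| exact Hr]|].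
apply Rminus_le.
replace (2 * K * (dtheta n ^ 3 / 3 * (M1 + M2 + rsum1 Mj n)) - 2 / 3 * K * dtheta n ^ 3 * (3 * M1 + 3 * M2 + rsum1 Mj n))
  with (- (2/3 * (K * dtheta n ^ 3) * (2 * M1 + 2 * M2))) by field.
assert (0 <= K * dtheta n ^ 3) by (apply Rmult_le_pos; lra).
assert (0 <= 2/3 * (K * dtheta n ^ 3) * (2 * M1 + 2 * M2)) by (apply Rmult_le_pos; [apply Rmult_le_pos|]; lra).
lra.
Qed.
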